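(* Let $q$ be an odd prime power, $\omega$ a non-square in $\mathbb F_q$, $\epsilon\in\mathbb F_{q^2}$ with $\epsilon^2=\omega$, and write $z=z_1+\epsilon z_2$ ($z_i\in\mathbb F_q$) for $z\in\mathbb F_{q^2}$. Let $\mathcal C: aX^2+bXY+cXZ+dYZ+eZ^2=0$ be a non-singular conic of $\mathrm{PG}(2,q^2)$, not defined over $\mathbb F_q$, with $b\ne0$, $b_1d_2=b_2d_1$, $(b_1,d_1)\ne(0,0)$, and $-bcd+ad^2+b^2e$ a nonzero square in $\mathbb F_{q^2}$. Put $a'=b_1a_2-a_1b_2$, $c'=b_1c_2-b_2c_1$, $e'=b_1e_2-b_2e_1$. In $\mathrm{PG}(3,q)$ with coordinates $(t_1:t_2:X:Z)$ let $\Pi$ be the plane $b_1X+d_1Z=0$, $\mathcal Q$ the quadric $b_2t_1^2-2b_1t_1t_2+b_2\omega t_2^2+a'X^2+c'XZ+e'Z^2=0$, and $\mathcal Q_0=\{P\in\mathcal Q: t_1=t_2=0\}$; all sets are sets of points of $\mathrm{PG}(3,q)$. Then $$E_q(\mathcal C)=\tfrac12\big(|\mathcal Q|-|\mathcal Q_0|-|\Pi\cap\mathcal Q|+|\mathcal Q_0\cap\Pi|\big)+q.$$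
   Context: $E_q(\mathcal C)$ is the number of points of $\mathrm{PG}(2,q)$ (canonically embedded in $\mathrm{PG}(2,q^2)$) external to $\mathcal C$, i.e. lying on two tangent lines of $\mathcal C$. A conic is defined over $\mathbb F_q$ if its equation is a scalar multiple of one with coefficients in $\mathbb F_q$. *)

(* Defs.v *)
From HB Require Import structures.
From mathcomp Require Import all_boot all_order all_algebra all_field.
Set Implicit Arguments. Unset Strict Implicit. Unset Printing Implicit Defensive.
Import Order.TTheory GRing.Theory Num.Theory.
Local Open Scope ring_scope.

(* Points of PG(2,K): nonzero vectors of K^3 normalised so that the first
   nonzero coordinate is 1 (one canonical representative per point). *)
Definition norm3 {K : fieldType} (p : K * K * K) : bool :=
  let: (x, y, z) := p in
  (x == 1) || ((x == 0) && (y == 1)) || [&& x == 0, y == 0 & z == 1].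

(* Points of PG(3,K), coordinates (t1 : t2 : X : Z), same convention. *)
Definition norm4 {K : fieldType} (p : K * K * K * K) : bool :=
  let: (t1, t2, x, z) := p in
  [|| t1 == 1, (t1 == 0) && (t2 == 1), [&& t1 == 0, t2 == 0 & x == 1]
    | [&& t1 == 0, t2 == 0, x == 0 & z == 1]].

Definition on_line {K : fieldType} (u p : K * K * K) : bool :=
  u.1.1 * p.1.1 + u.1.2 * p.1.2 + u.2 * p.2 == 0.

Definition conic_form {K : fieldType} (a b c d e : K) (p : K * K * K) : K :=
  let: (x, y, z) := p in
  a * x ^+ 2 + b * x * y + c * x * z + d * y * z + e * z ^+ 2.

Definition conic_singular_point {K : fieldType} (a b c d e : K) (p : K * K * K)
  : bool :=
  let: (x, y, z) := p in
  [&& conic_form a b c d e p == 0,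
      2 * a * x + b * y + c * z == 0,
      b * x + d * z == 0 &
      c * x + d * y + 2 * e * z == 0].

Definition conic_nonsingular {K : finFieldType} (a b c d e : K) : Prop :=
  forall p : K * K * K, norm3 p -> ~~ conic_singular_point a b c d e p.

Definition conic_defined_over {F L : fieldType} (iota : F -> L)
  (a b c d e : L) : Prop :=
  exists lam : L, lam != 0 /\
    exists fa fb fc fd fe : F,
      [/\ lam * a = iota fa, lam * b = iota fb, lam * c = iota fc,
          lam * d = iota fd & lam * e = iota fe].

Definition tangent_line {L : finFieldType} (a b c d e : L) (u : L * L * L) : bool :=
  norm3 u &&
  (#|[set p : L * L * L | [&& norm3 p, on_line u p & conic_form a b c d e p == 0]]|
     == 1%N).

Definition lift3 {F L : fieldType} (iota : F -> L) (p : F * F * F) : L * L * L :=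
  (iota p.1.1, iota p.1.2, iota p.2).

Definition Eq {F L : finFieldType} (iota : F -> L) (a b c d e : L) : nat :=
  #|[set p : F * F * F | norm3 p &&
      (#|[set u : L * L * L | tangent_line a b c d e u && on_line u (lift3 iota p)]|
         == 2%N)]|.

(* Main.v *)
Require Import Defs.
From HB Require Import structures.
From mathcomp Require Import all_boot all_order all_algebra all_field.
From mathcomp Require Import ring.
Import Order.TTheory GRing.Theory Num.Theory.
Local Open Scope ring_scope.
Set Implicit Arguments. Unset Strict Implicit. Unset Printing Implicit Defensive.
Arguments norm3 : simpl never.
Arguments norm4 : simpl never.
Lemma two_neq0 (K : finFieldType) : odd #|K| -> (2:K) != 0.
Proof.
move=> hodd; apply/negP => /eqP h2.
have hc : (2%N \in [pchar K]) by rewrite inE /= h2 eqxx.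
have := card_pprimeChar hc.
set n := logn _ _ => hK.
have hK' : #|K| = (2 ^ n)%N by exact: hK.
move: hodd (finNzRing_gt1 K); rewrite hK'.
by case: n {hK hK'} => [|n] //=; rewrite expnS oddM.
Qed.
Definition Nf (K : finFieldType) (x : K) : nat :=
  if x == 0 then 1%N else if [exists y, y ^+ 2 == x] then 2%N else 0%N.

Lemma sqrt_count (K : finFieldType) (h2 : (2:K) != 0) (x : K) :
  #|[set y : K | y ^+ 2 == x]| = Nf x.
Proof.
rewrite /Nf; have [->|x0] := eqVneq x 0.
  rewrite (_ : [set y : K | y ^+ 2 == 0] = [set 0]) ?cards1 //.
  by apply/setP => y; rewrite !inE sqrf_eq0.
case: existsP => [[y0 /eqP hy0]|hn].
  have y00 : y0 != 0 by apply: contraNneq x0 => e; rewrite -hy0 e expr2 mulr0.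
  have hne : y0 != - y0.
    apply: contraNneq y00 => e; have : 2 * y0 = 0 by rewrite mulr2n mulrDl mul1r {1}e addNr.
    by move/eqP; rewrite mulf_eq0 (negbTE h2) /= => /eqP ->.
  rewrite (_ : [set y : K | y ^+ 2 == x] = [set y0; - y0]) ?cards2 ?hne //.
  by apply/setP => y; rewrite !inE -hy0 eqf_sqr.
apply/eqP; rewrite cards_eq0; apply/eqP/setP => y; rewrite !inE.
by apply/negP => hy; apply: hn; exists y.
Qed.

Lemma Nf_scale (K : finFieldType) (k x : K) : k != 0 -> Nf (k ^+ 2 * x) = Nf x.
Proof.
move=> k0; rewrite /Nf mulf_eq0 sqrf_eq0 (negbTE k0) /=.
case: (x == 0) => //.
have -> : [exists y, y ^+ 2 == k ^+ 2 * x] = [exists y, y ^+ 2 == x] => //.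
apply/existsP/existsP => [[y /eqP hy]|[y /eqP hy]].
  exists (y / k); apply/eqP; rewrite expr_div_n hy mulrC mulKf //.
  by rewrite sqrf_eq0.
by exists (k * y); rewrite exprMn hy.
Qed.
Lemma card_pair (T1 T2 : finType) (P : T1 -> T2 -> bool) :
  #|[set w : T1 * T2 | P w.1 w.2]| = (\sum_s #|[set t | P s t]|)%N.
Proof.
rewrite -sum1dep_card big_mkcond /= -(pair_bigA _ (fun i j => if P i j then 1%N else 0%N)) /=.
by apply: eq_bigr => i _; rewrite -big_mkcond sum1dep_card.
Qed.

Lemma card_pair2 (T1 T2 : finType) (P : T1 -> T2 -> bool) :
  #|[set w : T1 * T2 | P w.1 w.2]| = (\sum_t #|[set s | P s t]|)%N.
Proof.
rewrite -sum1dep_card big_mkcond /= -(pair_bigA _ (fun i j => if P i j then 1%N else 0%N)) /=.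
rewrite exchange_big /=; apply: eq_bigr => i _.
by rewrite -big_mkcond sum1dep_card.
Qed.

Lemma sum_nz_const (K : finFieldType) (c : nat) :
  \sum_(t : K | t != 0) c = (#|K|.-1 * c)%N.
Proof. by rewrite sum_nat_const cardC1. Qed.

Definition bf (K : fieldType) (al be ga s t : K) := al * s ^+ 2 + be * s * t + ga * t ^+ 2.

Lemma roots_count (K : finFieldType) (h2 : (2:K) != 0) (al be ga : K) : al != 0 ->
  #|[set r : K | bf al be ga r 1 == 0]| = Nf (be ^+ 2 - 4 * al * ga).
Proof.
move=> al0; rewrite -sqrt_count //.
have h2a : 2 * al != 0 by rewrite mulf_neq0.
have key r : (bf al be ga r 1 == 0) = ((2 * al * r + be) ^+ 2 == be ^+ 2 - 4 * al * ga).
  rewrite -[(_ ^+ 2 == _)]subr_eq0 (_ : (2 * al * r + be) ^+ 2 - (be ^+ 2 - 4 * al * ga) = (2 * al) * 2 * bf al be ga r 1); last by rewrite /bf; ring.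
  by rewrite !mulf_eq0 (negbTE al0) (negbTE h2).
rewrite -(card_imset _ (fun x y (e : 2 * al * x + be = 2 * al * y + be) => mulfI h2a (addIr be e))).
apply: eq_card => y; rewrite !inE; apply/imsetP/idP => [[r]|hy].
  by rewrite inE key => /eqP hr ->; rewrite hr.
exists ((y - be) / (2 * al)); first by rewrite inE key mulrC divfK // subrK.
by rewrite mulrC divfK // subrK.
Qed.

Lemma binary_count_a (K : finFieldType) (h2 : (2:K) != 0) (al be ga : K) : al != 0 ->
  #|[set w : K * K | ((w.1 != 0) || (w.2 != 0)) && (bf al be ga w.1 w.2 == 0)]|
  = (#|K|.-1 * Nf (be ^+ 2 - 4 * al * ga)%R)%N.
Proof.
move=> al0; rewrite (card_pair2 (fun s t => ((s != 0) || (t != 0)) && (bf al be ga s t == 0))) (bigD1 0) //=.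
rewrite (_ : #|_| = 0%N); last first.
  apply/eqP; rewrite cards_eq0; apply/eqP/setP => s; rewrite !inE /bf.
  case: (eqVneq s 0) => [->|s0]; first by rewrite eqxx.
  rewrite /= (_ : al * s ^+ 2 + be * s * 0 + ga * 0 ^+ 2 = al * s ^+ 2); last by ring.
  rewrite mulf_eq0 (negbTE al0) /=.
  by rewrite sqrf_eq0 (negbTE s0).
rewrite add0n -sum_nz_const; apply: eq_bigr => t t0.
rewrite -roots_count //.
rewrite -[RHS](card_imset _ (mulIf t0)); apply: eq_card => s; rewrite !inE t0 orbT /=.
apply/idP/imsetP => [hs|[r]].
  exists (s / t); last by rewrite divfK.
  rewrite inE; move: hs; rewrite /bf => /eqP hs.
  have : t ^+ 2 * (al * (s / t) ^+ 2 + be * (s / t) * 1 + ga * 1 ^+ 2) = 0.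
    rewrite -hs; field; exact: t0.
  by move/eqP; rewrite mulf_eq0 sqrf_eq0 (negbTE t0).
rewrite inE /bf => /eqP hr ->.
rewrite (_ : _ + _ = t ^+ 2 * (al * r ^+ 2 + be * r * 1 + ga * 1 ^+ 2)); last by ring.
by rewrite hr mulr0.
Qed.

Lemma binary_count (K : finFieldType) (h2 : (2:K) != 0) (al be ga : K) :
  [|| al != 0, be != 0 | ga != 0] ->
  #|[set w : K * K | ((w.1 != 0) || (w.2 != 0)) && (bf al be ga w.1 w.2 == 0)]|
  = (#|K|.-1 * Nf (be ^+ 2 - 4 * al * ga)%R)%N.
Proof.
move=> hnz; have [al0|al0] := eqVneq al 0; last exact: binary_count_a.
have [ga0|ga0] := eqVneq ga 0; first last.
  rewrite (_ : be ^+ 2 - 4 * al * ga = be ^+ 2 - 4 * ga * al); last by ring.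
  rewrite -binary_count_a //.
  have swapI : injective (fun x : K * K => (x.2, x.1)) by move=> [? ?] [? ?] [-> ->].
  rewrite -[RHS](card_imset _ swapI); apply: eq_card => -[s t]; rewrite !inE /=.
  apply/idP/imsetP => [/andP[h1 /eqP h2']|[[s' t'] + [-> ->]]].
    exists (t, s) => //; rewrite inE /= orbC h1 /=; apply/eqP; rewrite -h2' /bf; ring.
  by rewrite inE /= /bf orbC => /andP[-> /eqP h]; rewrite -h /=; apply/eqP; ring.
have be0 : be != 0 by move: hnz; rewrite al0 ga0 !eqxx /= orbF.
rewrite al0 ga0 !mulr0 subr0 /Nf sqrf_eq0 (negbTE be0).
have -> : [exists y, y ^+ 2 == be ^+ 2] by apply/existsP; exists be.
rewrite (card_pair (fun s t => ((s != 0) || (t != 0)) && (bf 0 be 0 s t == 0))) (bigD1 0) //=.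
rewrite (_ : #|_| = #|K|.-1); last first.
  rewrite -(cardC1 (0:K)); apply: eq_card => t; rewrite !inE /= /bf eqxx /=; case: (t == 0) => //=.
  by apply/eqP; ring.
rewrite (eq_bigr (fun _ => 1%N)); last first.
  move=> s s0; rewrite -(cards1 (0:K)); apply: eq_card => t; rewrite !inE s0 /= /bf.
  rewrite (_ : 0 * s ^+ 2 + be * s * t + 0 * t ^+ 2 = (be * s) * t); last by ring.
  by rewrite mulf_eq0 mulf_eq0 (negbTE be0) (negbTE s0).
by rewrite sum_nz_const muln1 addnn -muln2.
Qed.
Definition scale3 (K : fieldType) (l : K) (v : K * K * K) := (l * v.1.1, l * v.1.2, l * v.2).
Definition lead3 (K : fieldType) (v : K * K * K) :=
  if v.1.1 != 0 then v.1.1 else if v.1.2 != 0 then v.1.2 else v.2.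

Lemma lead3_scale (K : fieldType) (l : K) p : norm3 p -> l != 0 -> lead3 (scale3 l p) = l.
Proof.
case: p => [[x y] z] /= hp l0; rewrite /lead3 /=.
case/orP: hp => [/orP[/eqP->|/andP[/eqP-> /eqP->]]|/and3P[/eqP-> /eqP-> /eqP->]];
  by rewrite ?mulr1 ?mulr0 ?l0 ?eqxx.
Qed.

Lemma lead3_neq0 (K : fieldType) (v : K * K * K) : v != (0, 0, 0) -> lead3 v != 0.
Proof.
case: v => [[x y] z] hv; rewrite /lead3 /=.
have [x0|x0] := eqVneq x 0; last by [].
have [y0|y0] := eqVneq y 0; last by [].
by apply: contraNneq hv => z0; rewrite x0 y0 z0.
Qed.

Lemma norm3_lead (K : fieldType) (v : K * K * K) : v != (0, 0, 0) ->
  norm3 (scale3 (lead3 v)^-1 v).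
Proof.
case: v => [[x y] z]; rewrite /lead3 /= /norm3.
case: (eqVneq x 0) => [->|x0] /= hv; last by rewrite mulVf ?eqxx.
case: (eqVneq y 0) => [y0|y0] /=; last by rewrite mulr0 mulVf ?eqxx ?orbT.
case: (eqVneq z 0) => [z0|z0]; first by move: hv; rewrite y0 z0 eqxx.
by rewrite y0 !mulr0 mulVf ?eqxx ?orbT.
Qed.

Lemma scale3K (K : fieldType) (l : K) v : l != 0 -> scale3 l (scale3 l^-1 v) = v.
Proof. by case: v => [[x y] z] l0; rewrite /scale3 /= !mulrA divff ?mul1r. Qed.

Lemma scale3_inj (K : fieldType) (l : K) v w : l != 0 -> scale3 l v = scale3 l w -> v = w.
Proof.
case: v => [[x y] z]; case: w => [[x' y'] z'] l0 [] /(mulfI l0) -> /(mulfI l0) -> /(mulfI l0) -> //.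
Qed.

Lemma norm3_neq0 (K : fieldType) (p : K * K * K) : norm3 p -> p != (0, 0, 0).
Proof.
case: p => [[x y] z] /=.
case/orP => [/orP[/eqP->|/andP[_ /eqP->]]|/and3P[_ _ /eqP->]];
  by rewrite !xpair_eqE ?oner_eq0 ?andbF ?andFb.
Qed.

Lemma norm_count3 (K : finFieldType) (S : pred (K * K * K)) :
  (forall l v, l != 0 -> S (scale3 l v) = S v) ->
  #|[set v | (v != (0, 0, 0)) && S v]| = (#|K|.-1 * #|[set p | norm3 p && S p]|)%N.
Proof.
move=> hS.
have -> : #|K|.-1 = #|[set l : K | l != 0]|.
  by rewrite -(cardC1 (0:K)); apply: eq_card => l; rewrite !inE.
rewrite -cardsX -(@card_in_imset _ _ (fun x => scale3 x.1 x.2)); last first.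
  move=> [l p] [l' p']; rewrite !inE /= => /andP[l0 /andP[np _]] /andP[l0' /andP[np' _]] e.
  have ell : l = l' by rewrite -(lead3_scale np l0) -(lead3_scale np' l0') e.
  by move: e; rewrite -ell => /(scale3_inj l0) ->; rewrite ell.
apply: eq_card => v; rewrite !inE; apply/idP/imsetP => [/andP[v0 Sv]|[[l p]]].
  exists (lead3 v, scale3 (lead3 v)^-1 v); last by rewrite /= scale3K ?lead3_neq0.
  by rewrite !inE /= lead3_neq0 //= norm3_lead //= hS // invr_eq0 lead3_neq0.
rewrite !inE /= => /andP[l0 /andP[np Sp]] ->; rewrite hS // Sp andbT.
apply: contraNneq (norm3_neq0 np) => e; apply/eqP.
by apply: (@scale3_inj _ l) => //; rewrite e /scale3 /= !mulr0.
Qed.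

Definition scale4 (K : fieldType) (l : K) (v : K * K * K * K) :=
  (l * v.1.1.1, l * v.1.1.2, l * v.1.2, l * v.2).
Definition lead4 (K : fieldType) (v : K * K * K * K) :=
  if v.1.1.1 != 0 then v.1.1.1 else if v.1.1.2 != 0 then v.1.1.2
  else if v.1.2 != 0 then v.1.2 else v.2.

Lemma lead4_scale (K : fieldType) (l : K) p : norm4 p -> l != 0 -> lead4 (scale4 l p) = l.
Proof.
case: p => [[[x y] z] w] hp l0; rewrite /lead4 /=; move: hp; rewrite /norm4.
case/or4P => [/eqP->|/andP[/eqP-> /eqP->]|/and3P[/eqP-> /eqP-> /eqP->]|/and4P[/eqP-> /eqP-> /eqP-> /eqP->]];
  by rewrite ?mulr1 ?mulr0 ?l0 ?eqxx.
Qed.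

Lemma lead4_neq0 (K : fieldType) (v : K * K * K * K) : v != (0, 0, 0, 0) -> lead4 v != 0.
Proof.
case: v => [[[x y] z] w] hv; rewrite /lead4 /=.
have [x0|x0] := eqVneq x 0; last by [].
have [y0|y0] := eqVneq y 0; last by [].
have [z0|z0] := eqVneq z 0; last by [].
by apply: contraNneq hv => w0; rewrite x0 y0 z0 w0.
Qed.

Lemma norm4_lead (K : fieldType) (v : K * K * K * K) : v != (0, 0, 0, 0) ->
  norm4 (scale4 (lead4 v)^-1 v).
Proof.
case: v => [[[x y] z] w]; rewrite /lead4 /= /norm4 /=.
case: (eqVneq x 0) => [->|x0] /= hv; last by rewrite mulVf ?eqxx.
case: (eqVneq y 0) => [y0|y0] /=; last by rewrite mulr0 mulVf ?eqxx ?orbT.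
case: (eqVneq z 0) => [z0|z0] /=; last by rewrite y0 !mulr0 mulVf ?eqxx ?orbT.
case: (eqVneq w 0) => [w0|w0]; first by move: hv; rewrite y0 z0 w0 eqxx.
by rewrite y0 z0 !mulr0 mulVf ?eqxx ?orbT.
Qed.

Lemma scale4K (K : fieldType) (l : K) v : l != 0 -> scale4 l (scale4 l^-1 v) = v.
Proof. by case: v => [[[x y] z] w] l0; rewrite /scale4 /= !mulrA divff ?mul1r. Qed.

Lemma scale4_inj (K : fieldType) (l : K) v u : l != 0 -> scale4 l v = scale4 l u -> v = u.
Proof.
case: v => [[[x y] z] w]; case: u => [[[x' y'] z'] w'] l0 [] /(mulfI l0) -> /(mulfI l0) -> /(mulfI l0) -> /(mulfI l0) -> //.
Qed.

Lemma norm4_neq0 (K : fieldType) (p : K * K * K * K) : norm4 p -> p != (0, 0, 0, 0).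
Proof.
case: p => [[[x y] z] w]; rewrite /norm4.
case/or4P => [/eqP->|/andP[_ /eqP->]|/and3P[_ _ /eqP->]|/and4P[_ _ _ /eqP->]];
  by rewrite !xpair_eqE ?oner_eq0 ?andbF ?andFb.
Qed.

Lemma norm_count4 (K : finFieldType) (S : pred (K * K * K * K)) :
  (forall l v, l != 0 -> S (scale4 l v) = S v) ->
  #|[set v | (v != (0, 0, 0, 0)) && S v]| = (#|K|.-1 * #|[set p | norm4 p && S p]|)%N.
Proof.
move=> hS.
have -> : #|K|.-1 = #|[set l : K | l != 0]|.
  by rewrite -(cardC1 (0:K)); apply: eq_card => l; rewrite !inE.
rewrite -cardsX -(@card_in_imset _ _ (fun x => scale4 x.1 x.2)); last first.
  move=> [l p] [l' p']; rewrite !inE /= => /andP[l0 /andP[np _]] /andP[l0' /andP[np' _]] e.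
  have ell : l = l' by rewrite -(lead4_scale np l0) -(lead4_scale np' l0') e.
  by move: e; rewrite -ell => /(scale4_inj l0) ->; rewrite ell.
apply: eq_card => v; rewrite !inE; apply/idP/imsetP => [/andP[v0 Sv]|[[l p]]].
  exists (lead4 v, scale4 (lead4 v)^-1 v); last by rewrite /= scale4K ?lead4_neq0.
  by rewrite !inE /= lead4_neq0 //= norm4_lead //= hS // invr_eq0 lead4_neq0.
rewrite !inE /= => /andP[l0 /andP[np Sp]] ->; rewrite hS // Sp andbT.
apply: contraNneq (norm4_neq0 np) => e; apply/eqP.
by apply: (@scale4_inj _ l) => //; rewrite e /scale4 /= !mulr0.
Qed.

Record sym (K : Type) := Sym { m00 : K; m01 : K; m02 : K; m11 : K; m12 : K; m22 : K }.

Section S.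
Variable K : fieldType.
Implicit Types (m : sym K) (u v w : K * K * K).

Definition qf m v := m00 m * v.1.1 ^+ 2 + m11 m * v.1.2 ^+ 2 + m22 m * v.2 ^+ 2
  + 2 * (m01 m * v.1.1 * v.1.2 + m02 m * v.1.1 * v.2 + m12 m * v.1.2 * v.2).
Definition bil m v w := m00 m * v.1.1 * w.1.1 + m11 m * v.1.2 * w.1.2 + m22 m * v.2 * w.2
  + m01 m * (v.1.1 * w.1.2 + v.1.2 * w.1.1) + m02 m * (v.1.1 * w.2 + v.2 * w.1.1)
  + m12 m * (v.1.2 * w.2 + v.2 * w.1.2).
Definition adj m := Sym (m11 m * m22 m - m12 m ^+ 2) (m02 m * m12 m - m01 m * m22 m)
  (m01 m * m12 m - m02 m * m11 m) (m00 m * m22 m - m02 m ^+ 2)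
  (m01 m * m02 m - m00 m * m12 m) (m00 m * m11 m - m01 m ^+ 2).
Definition det m := m00 m * m00 (adj m) + m01 m * m01 (adj m) + m02 m * m02 (adj m).
Definition dot u v := u.1.1 * v.1.1 + u.1.2 * v.1.2 + u.2 * v.2.
Definition cross v w := (v.1.2 * w.2 - v.2 * w.1.2, v.2 * w.1.1 - v.1.1 * w.2,
  v.1.1 * w.1.2 - v.1.2 * w.1.1).
Definition lin (R1 R2 : K * K * K) (s t : K) := (s * R1.1.1 + t * R2.1.1, s * R1.1.2 + t * R2.1.2,
  s * R1.2 + t * R2.2).

Lemma qf_lin m (R1 R2 : K * K * K) s t : qf m (lin R1 R2 s t) =
  qf m R1 * s ^+ 2 + 2 * bil m R1 R2 * s * t + qf m R2 * t ^+ 2.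
Proof. rewrite /qf /bil /lin /=; ring. Qed.

Lemma disc_id m (R1 R2 : K * K * K) : bil m R1 R2 ^+ 2 - qf m R1 * qf m R2 = - qf (adj m) (cross R1 R2).
Proof. rewrite /qf /bil /adj /cross /=; ring. Qed.

Definition detB (al be ga x y z : K) :=
  al * (ga * z - y ^+ 2) - be * (be * z - x * y) + x * (be * y - ga * x).

Lemma nd0 m (R1 R2 : K * K * K) : (cross R1 R2).1.1 ^+ 2 * det m =
  detB (qf m R1) (bil m R1 R2) (qf m R2) (bil m R1 (1,0,0)) (bil m R2 (1,0,0)) (qf m (1,0,0)).
Proof. rewrite /detB /qf /bil /det /adj /cross /=; ring. Qed.
Lemma nd1 m (R1 R2 : K * K * K) : (cross R1 R2).1.2 ^+ 2 * det m =
  detB (qf m R1) (bil m R1 R2) (qf m R2) (bil m R1 (0,1,0)) (bil m R2 (0,1,0)) (qf m (0,1,0)).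
Proof. rewrite /detB /qf /bil /det /adj /cross /=; ring. Qed.
Lemma nd2 m (R1 R2 : K * K * K) : (cross R1 R2).2 ^+ 2 * det m =
  detB (qf m R1) (bil m R1 R2) (qf m R2) (bil m R1 (0,0,1)) (bil m R2 (0,0,1)) (qf m (0,0,1)).
Proof. rewrite /detB /qf /bil /det /adj /cross /=; ring. Qed.

Lemma qf_scale m k v : qf m (scale3 k v) = k ^+ 2 * qf m v.
Proof. rewrite /qf /scale3 /=; ring. Qed.

Lemma dot_lin u (R1 R2 : K * K * K) s t : dot u (lin R1 R2 s t) = s * dot u R1 + t * dot u R2.
Proof. rewrite /dot /lin /=; ring. Qed.

Lemma adj_adj m : adj (adj m) = Sym (det m * m00 m) (det m * m01 m) (det m * m02 m)
   (det m * m11 m) (det m * m12 m) (det m * m22 m).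
Proof. rewrite /adj /det /=; congr Sym; ring. Qed.

Lemma det_adj m : det (adj m) = det m ^+ 2.
Proof. rewrite /adj /det /=; ring. Qed.

End S.

Lemma plane_count (K : finFieldType) (h2 : (2:K) != 0) (m : sym K)
  (u R1 R2 l1 l2 : K * K * K) (k : K) :
  det m != 0 -> u != (0, 0, 0) -> k != 0 -> cross R1 R2 = scale3 k u ->
  dot u R1 = 0 -> dot u R2 = 0 -> dot l1 R1 = 1 -> dot l1 R2 = 0 ->
  dot l2 R1 = 0 -> dot l2 R2 = 1 ->
  (forall v, dot u v = 0 -> v = lin R1 R2 (dot l1 v) (dot l2 v)) ->
  #|[set v | [&& v != (0, 0, 0), dot u v == 0 & qf m v == 0]]|
    = (#|K|.-1 * Nf (- qf (adj m) u))%N.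
Proof.
move=> dm u0 k0 hc hu1 hu2 h11 h12 h21 h22 hsp.
set al := qf m R1; set be' := bil m R1 R2; set ga := qf m R2.
have hnd : [|| al != 0, 2 * be' != 0 | ga != 0].
  apply: contraT => /norP[/negbNE/eqP a0 /norP[/negbNE/eqP b0 /negbNE/eqP g0]].
  have b0' : be' = 0 by move/eqP: b0; rewrite mulf_eq0 (negbTE h2) => /eqP.
  have : cross R1 R2 != (0, 0, 0).
    rewrite hc; apply: contraNneq u0; case: u {hc hu1 hu2 hsp} => [[x y] z].
    rewrite /scale3 /= => -[/eqP]; rewrite mulf_eq0 (negbTE k0) /= => /eqP ->.
    move/eqP; rewrite mulf_eq0 (negbTE k0) /= => /eqP ->.
    by move/eqP; rewrite mulf_eq0 (negbTE k0) /= => /eqP ->.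
  have e0 := nd0 m R1 R2; have e1 := nd1 m R1 R2; have e2 := nd2 m R1 R2.
  rewrite -/al -/be' -/ga a0 b0' g0 /detB in e0 e1 e2.
  move: e0 e1 e2; rewrite !mul0r !subrr !mulr0 !addr0.
  move/eqP; rewrite mulf_eq0 (negbTE dm) orbF sqrf_eq0 => /eqP c0.
  move/eqP; rewrite mulf_eq0 (negbTE dm) orbF sqrf_eq0 => /eqP c1.
  move/eqP; rewrite mulf_eq0 (negbTE dm) orbF sqrf_eq0 => /eqP c2.
  by case: (cross R1 R2) c0 c1 c2 => [[x y] z] /= -> -> ->; rewrite eqxx.
have linI : injective (fun w : K * K => lin R1 R2 w.1 w.2).
  move=> [s t] [s' t'] /= e.
  have := congr1 (dot l1) e; have := congr1 (dot l2) e.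
  by rewrite !dot_lin h11 h12 h21 h22 !mulr0 !mulr1 !addr0 !add0r => -> ->.
have lin0 s t : (lin R1 R2 s t == (0, 0, 0)) = (s == 0) && (t == 0).
  apply/eqP/andP => [e|[/eqP-> /eqP->]]; last by rewrite /lin /= !mul0r !addr0.
  have := linI (s, t) (0, 0); rewrite /= e /lin /= !mul0r !addr0 => /(_ erefl) [-> ->].
  by rewrite eqxx.
have -> : Nf (- qf (adj m) u) = Nf ((2 * be') ^+ 2 - 4 * al * ga).
  rewrite (_ : (2 * be') ^+ 2 - 4 * al * ga = 4 * (be' ^+ 2 - al * ga)); last by ring.
  rewrite disc_id hc qf_scale (_ : 4 * - (k ^+ 2 * qf (adj m) u) = (2 * k) ^+ 2 * - qf (adj m) u);
    last by ring.
  by rewrite Nf_scale // mulf_neq0.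
rewrite -binary_count //.
rewrite -[RHS](card_imset _ linI); apply: eq_card => v; rewrite !inE.
apply/idP/imsetP => [/and3P[v0 /eqP uv /eqP qv]|[[s t]]].
  exists (dot l1 v, dot l2 v); last exact: hsp.
  rewrite inE /=; move: v0 qv; rewrite {1 2}(hsp v uv) lin0 qf_lin.
  rewrite negb_and => -> /= hq; apply/eqP; rewrite -hq /bf /al /be' /ga; ring.
rewrite inE /= => /andP[hw /eqP hf] ->.
rewrite lin0 negb_and hw dot_lin hu1 hu2 !mulr0 addr0 eqxx qf_lin /=.
by apply/eqP; rewrite -hf /bf /al /be' /ga; ring.
Qed.

Lemma plane_count_u (K : finFieldType) (h2 : (2:K) != 0) (m : sym K) (u : K * K * K) :
  det m != 0 -> u != (0, 0, 0) ->
  #|[set v | [&& v != (0, 0, 0), dot u v == 0 & qf m v == 0]]|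
    = (#|K|.-1 * Nf (- qf (adj m) u))%N.
Proof.
move=> dm u0; case: u u0 => [[x y] z] u0.
have [x0|x0] := eqVneq x 0; first last.
  apply: (@plane_count _ h2 m _ (-y, x, 0) (-z, 0, x) (0, x^-1, 0) (0, 0, x^-1) x) => //;
    rewrite /dot /cross /scale3 /lin /=; try (by field); try (by congr (_, _, _); ring).
  move=> [[a b] c] /= h; congr (_, _, _); last 2 first; try field => //.
  rewrite (_ : a = (x * a + y * b + z * c - y * b - z * c) / x); last by field.
  by rewrite h; field.
have [y0|y0] := eqVneq y 0; first last.
  apply: (@plane_count _ h2 m _ (y, -x, 0) (0, -z, y) (y^-1, 0, 0) (0, 0, y^-1) (-y)) => //;
    rewrite /dot /cross /scale3 /lin /= ?oppr_eq0 //; try (by field); try (by congr (_, _, _); ring).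
  move=> [[a b] c] /= h; congr (_, _, _); first 1 last; try field => //.
  rewrite (_ : b = (x * a + y * b + z * c - x * a - z * c) / y); last by field.
  by rewrite h; field.
have [z0|z0] := eqVneq z 0; first by move: u0; rewrite x0 y0 z0 eqxx.
apply: (@plane_count _ h2 m _ (z, 0, -x) (0, z, -y) (z^-1, 0, 0) (0, z^-1, 0) z) => //;
  rewrite /dot /cross /scale3 /lin /=; try (by field); try (by congr (_, _, _); ring).
move=> [[a b] c] /= h; congr (_, _, _); try field => //.
rewrite (_ : c = (x * a + y * b + z * c - x * a - y * b) / z); last by field.
by rewrite h; field.
Qed.
Arguments conic_form : simpl never.
Lemma qf_mulS (K : fieldType) (k : K) (m : sym K) v :
  qf (Sym (k * m00 m) (k * m01 m) (k * m02 m) (k * m11 m) (k * m12 m) (k * m22 m)) v = k * qf m v.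
Proof. rewrite /qf /=; ring. Qed.

Section Conic.
Variables (L : finFieldType) (a b c d e : L).
Hypothesis h2 : (2 : L) != 0.

Definition Mc := Sym a (b / 2) (c / 2) 0 (d / 2) e.

Lemma conic_qf (v : L * L * L) : qf Mc v = conic_form a b c d e v.
Proof. by case: v => [[x y] z]; rewrite /qf /conic_form /=; field. Qed.

Lemma det_Mc : det Mc = (b * c * d - a * d ^+ 2 - b ^+ 2 * e) / 4.
Proof.
rewrite /det /adj /=; field.
by rewrite (_ : (4 : L) = 2 * 2) ?mulf_neq0 //; ring.
Qed.

Lemma conic_scale (l : L) (v : L * L * L) : conic_form a b c d e (scale3 l v) = l ^+ 2 * conic_form a b c d e v.
Proof. by case: v => [[x y] z]; rewrite /conic_form /scale3 /=; ring. Qed.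

Lemma dot_scale (u v : L * L * L) (l : L) : dot u (scale3 l v) = l * dot u v.
Proof. by rewrite /dot /scale3 /=; ring. Qed.

Lemma dotC (u v : L * L * L) : dot u v = dot v u.
Proof. by rewrite /dot; ring. Qed.

Lemma card_gt1 : (0 < #|L|.-1)%N.
Proof. by have := finNzRing_gt1 L; case: #|L| => [|[|n]]. Qed.

Lemma tangent_iff (u : L * L * L) : det Mc != 0 ->
  tangent_line a b c d e u = norm3 u && (qf (adj Mc) u == 0).
Proof.
move=> dm; rewrite /tangent_line; case nu: (norm3 u) => //=.
have H := @norm_count3 L (fun p => (dot u p == 0) && (conic_form a b c d e p == 0)).
rewrite /= in H.
have := plane_count_u h2 dm (norm3_neq0 nu).
rewrite (_ : [set v | _] = [set v | (v != (0, 0, 0)) && ((dot u v == 0) && (conic_form a b c d e v == 0))]); last first.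
  by apply/setP => v; rewrite !inE conic_qf.
rewrite H; last by move=> l v l0 /=; rewrite dot_scale conic_scale mulf_eq0 (negbTE l0) mulf_eq0 sqrf_eq0 (negbTE l0).
move/eqP; rewrite eqn_mul2l (negbTE (lt0n_neq0 card_gt1)) /= => /eqP ->.
rewrite /Nf oppr_eq0; case: (qf _ _ == 0) => //; by case: [exists _, _].
Qed.

Lemma through_count (P : L * L * L) : det Mc != 0 -> P != (0, 0, 0) ->
  #|[set u | tangent_line a b c d e u && on_line u P]|
    = Nf (- det Mc * conic_form a b c d e P).
Proof.
move=> dm P0.
have dm' : det (adj Mc) != 0 by rewrite det_adj sqrf_eq0.
have H := @norm_count3 L (fun u => (dot P u == 0) && (qf (adj Mc) u == 0)).
rewrite /= in H.
have := plane_count_u h2 dm' P0.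
rewrite H; last first.
  by move=> l v l0 /=; rewrite dot_scale qf_scale mulf_eq0 (negbTE l0) mulf_eq0 sqrf_eq0 (negbTE l0).
move/eqP; rewrite eqn_mul2l (negbTE (lt0n_neq0 card_gt1)) /= => /eqP.
rewrite (_ : [set p | _] = [set u | tangent_line a b c d e u && on_line u P]); last first.
  apply/setP => u; rewrite !inE tangent_iff //.
  have -> : on_line u P = (dot P u == 0) by rewrite dotC.
  by case: (norm3 u); case: (qf _ _ == 0); case: (dot P u == 0).
move=> ->; congr Nf.
by rewrite adj_adj qf_mulS conic_qf mulNr.
Qed.

End Conic.

Lemma card_gt1' (K : finFieldType) : (0 < #|K|.-1)%N.
Proof. by have := finNzRing_gt1 K; case: #|K| => [|[|n]]. Qed.

Section Sg.
Variables (F L : finFieldType) (iota : {rmorphism F -> L}).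
Hypothesis hL : #|L| = (#|F| ^ 2)%N.
Variable omega : F.
Hypothesis homega : ~ exists x : F, x ^+ 2 = omega.
Variable eps : L.
Hypothesis heps : eps ^+ 2 = iota omega.

Definition sg (t : F * F) : L := iota t.1 + eps * iota t.2.

Lemma sg_mul s t : sg s * sg t = sg (s.1 * t.1 + omega * s.2 * t.2, s.1 * t.2 + s.2 * t.1).
Proof. rewrite /sg /= !rmorphD !rmorphM -heps; ring. Qed.

Lemma sg_add s t : sg s + sg t = sg (s.1 + t.1, s.2 + t.2).
Proof. rewrite /sg /= !rmorphD; ring. Qed.

Lemma sg_inj : injective sg.
Proof.
move=> [s1 s2] [t1 t2]; rewrite /sg /= => e.
have [e2|ne] := eqVneq s2 t2.
  by move: e; rewrite e2 => /addIr /fmorph_inj ->.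
exfalso; apply: homega; exists ((t1 - s1) / (s2 - t2)).
apply: (fmorph_inj iota); rewrite -heps rmorphXn fmorph_div !rmorphB.
have ne' : iota s2 - iota t2 != 0 by rewrite -rmorphB fmorph_eq0 subr_eq0.
have -> : eps = (iota t1 - iota s1) / (iota s2 - iota t2).
  apply: (mulIf ne'); rewrite divfK //.
  apply: (@addIr _ (iota s1 + eps * iota t2)).
  rewrite (_ : eps * _ + _ = iota s1 + eps * iota s2); last by ring.
  by rewrite e; ring.
by [].
Qed.

Lemma sg_surj y : exists t, sg t = y.
Proof.
have H : sg @: [set: F * F] = [set: L].
  apply/eqP; rewrite eqEcard subsetT /= card_imset; last exact: sg_inj.
  by rewrite !cardsT card_prod hL mulnn.
have : y \in sg @: [set: F * F] by rewrite H inE.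
by case/imsetP => t _ ->; exists t.
Qed.

Lemma sg_eq0 t : (sg t == 0) = (t == (0, 0)).
Proof.
have -> : (0 : L) = sg (0, 0) by rewrite /sg /= rmorph0 mulr0 addr0.
by rewrite (inj_eq sg_inj).
Qed.

Lemma sg_sqr t : sg t ^+ 2 = sg (t.1 ^+ 2 + omega * t.2 ^+ 2, 2 * t.1 * t.2).
Proof. rewrite expr2 sg_mul; congr sg; congr (_, _); ring. Qed.

Lemma cnt_sg (h2 : (2 : L) != 0) (x : L) :
  #|[set t : F * F | (t != (0, 0)) && (sg t ^+ 2 == x)]| = if Nf x == 2%N then 2%N else 0%N.
Proof.
rewrite -(card_imset _ sg_inj).
rewrite (_ : sg @: _ = [set y | (y != 0) && (y ^+ 2 == x)]); last first.
  apply/setP => y; rewrite inE; apply/imsetP/idP => [[t]|/andP[y0 hy]].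
    by rewrite inE -sg_eq0 => /andP[h1 h2'] ->; rewrite h1.
  have [t ht] := sg_surj y; exists t => //.
  by rewrite inE -sg_eq0 ht y0.
have [->|x0] := eqVneq x 0.
  rewrite /Nf eqxx /=; apply/eqP; rewrite cards_eq0; apply/eqP/setP => y.
  by rewrite !inE sqrf_eq0; case: (y == 0).
rewrite (_ : [set y | _] = [set y | y ^+ 2 == x]); last first.
  apply/setP => y; rewrite !inE; case: (eqVneq (y ^+ 2) x) => [e|ne]; rewrite ?andbT ?andbF //.
  by apply: contraNneq x0 => y0; rewrite -e y0 expr2 mulr0.
rewrite sqrt_count //; move: x0; rewrite /Nf => /negbTE ->.
by case: [exists _, _].
Qed.

End Sg.

Section Main.
Variables (F L : finFieldType) (iota : {rmorphism F -> L}).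
Hypothesis hoddq : odd #|F|.
Hypothesis hL : #|L| = (#|F| ^ 2)%N.
Variable omega : F.
Hypothesis homega : ~ exists x : F, x ^+ 2 = omega.
Variable eps : L.
Hypothesis heps : eps ^+ 2 = iota omega.
Variables (a b c d e : L) (a1 a2 b1 b2 c1 c2 d1 d2 e1 e2 : F).
Hypotheses (ha : a = iota a1 + eps * iota a2) (hb : b = iota b1 + eps * iota b2)
  (hc : c = iota c1 + eps * iota c2) (hd : d = iota d1 + eps * iota d2)
  (he : e = iota e1 + eps * iota e2).
Hypotheses (hb0 : b != 0) (hbd : b1 * d2 = b2 * d1) (hbd1 : (b1, d1) != (0, 0)).
Variable s : L.
Hypotheses (hs0 : s != 0) (hs : s ^+ 2 = - b * c * d + a * d ^+ 2 + b ^+ 2 * e).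

Local Notation sg := (sg iota eps).
Definition Cl (v : F * F * F) := conic_form a b c d e (lift3 iota v).
Definition lv (v : F * F * F) : F := b1 * v.1.1 + d1 * v.2.
Definition Cre (v : F * F * F) : F := a1 * v.1.1 ^+ 2 + b1 * v.1.1 * v.1.2 + c1 * v.1.1 * v.2
  + d1 * v.1.2 * v.2 + e1 * v.2 ^+ 2.
Definition Cim (v : F * F * F) : F := a2 * v.1.1 ^+ 2 + b2 * v.1.1 * v.1.2 + c2 * v.1.1 * v.2
  + d2 * v.1.2 * v.2 + e2 * v.2 ^+ 2.
Definition Qd (p : F * F * F * F) : F :=
  b2 * p.1.1.1 ^+ 2 - 2 * b1 * p.1.1.1 * p.1.1.2
  + b2 * omega * p.1.1.2 ^+ 2 + (b1 * a2 - a1 * b2) * p.1.2 ^+ 2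
  + (b1 * c2 - b2 * c1) * p.1.2 * p.2 + (b1 * e2 - b2 * e1) * p.2 ^+ 2.
Definition fv (v : F * F * F) := #|[set t : F * F | (t != (0, 0)) && (sg t ^+ 2 == Cl v)]|.
Definition Wset := [set w : F * F * F * F | [&& w.1.1 != (0, 0), b1 * w.1.2 + d1 * w.2 != 0 & Qd w == 0]].
Definition Eset := [set p : F * F * F | norm3 p && (Nf (Cl p) == 2%N)].
Definition Vset := [set v : F * F * F | (v != (0, 0, 0)) && (Nf (Cl v) == 2%N)].
Definition Nset := [set p : F * F * F * F | norm4 p && [&& p.1.1 != (0, 0), b1 * p.1.2 + d1 * p.2 != 0 & Qd p == 0]].

Lemma h2L : (2 : L) != 0.
Proof. by apply: two_neq0; rewrite hL oddX hoddq orbT. Qed.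

Lemma b10 : b1 != 0.
Proof.
case: (eqVneq b1 0) => // e0; exfalso.
move: hbd; rewrite e0 mul0r => /esym/eqP; rewrite mulf_eq0 => /orP[/eqP b20|/eqP d10].
  by move: hb0; rewrite hb e0 b20 !rmorph0 mulr0 addr0 eqxx.
by move: hbd1; rewrite e0 d10 eqxx.
Qed.

Lemma C_sg v : Cl v = sg (Cre v, Cim v).
Proof.
case: v => [[x y] z]; rewrite /Cl /conic_form /lift3 /sg /Cre /Cim ha hb hc hd he /=.
rewrite !rmorphD !rmorphM ?rmorphXn; ring.
Qed.

Lemma eqs t v : (sg t ^+ 2 == Cl v) =
  (t.1 ^+ 2 + omega * t.2 ^+ 2 == Cre v) && (2 * t.1 * t.2 == Cim v).
Proof. by rewrite (sg_sqr heps) C_sg (inj_eq (sg_inj homega heps)) xpair_eqE. Qed.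

Lemma hdet : - det (Mc a b c d e) = (s / 2) ^+ 2.
Proof.
have h2 := h2L; rewrite det_Mc // expr_div_n hs; field.
by rewrite (_ : (4 : L) = 2 * 2) ?mulf_neq0 //; ring.
Qed.

Lemma dm : det (Mc a b c d e) != 0.
Proof.
rewrite -oppr_eq0 hdet sqrf_eq0 mulf_neq0 // invr_eq0; exact: h2L.
Qed.

Lemma lift_neq0 (p : F * F * F) : p != (0, 0, 0) -> lift3 iota p != (0, 0, 0).
Proof.
case: p => [[x y] z]; rewrite /lift3 /= !xpair_eqE !fmorph_eq0.
by [].
Qed.

Lemma step1 : Eq iota a b c d e = #|Eset|.
Proof.
rewrite /Eq /Eset; apply: eq_card => p; rewrite !inE.
case np: (norm3 p) => //=.
rewrite (through_count h2L dm (lift_neq0 (norm3_neq0 np))) hdet Nf_scale //.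
rewrite mulf_neq0 // invr_eq0; exact: h2L.
Qed.

Lemma Cl_scale l v : Cl (scale3 l v) = iota l ^+ 2 * Cl v.
Proof.
rewrite /Cl -conic_scale; congr conic_form.
by rewrite /lift3 /scale3 /= !rmorphM.
Qed.

Lemma step2 : (#|F|.-1 * #|Eset|)%N = #|Vset|.
Proof.
have H := (@norm_count3 F (fun v => Nf (Cl v) == 2%N)).
rewrite /Vset /Eset H //.
by move=> l v l0; rewrite Cl_scale Nf_scale // fmorph_eq0.
Qed.

Lemma Cl0 : Cl (0, 0, 0) = 0.
Proof. rewrite /Cl /lift3 /= rmorph0 /conic_form /=; ring. Qed.

Lemma fvE v : fv v = if Nf (Cl v) == 2%N then 2%N else 0%N.
Proof. exact: (cnt_sg hL homega heps h2L). Qed.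

Lemma step3 : (2 * #|Vset|)%N = (\sum_v fv v)%N.
Proof.
rewrite (_ : Vset = [set v | Nf (Cl v) == 2%N]); last first.
  apply/setP => v; rewrite !inE; case: eqP => [->|] //=.
  by rewrite Cl0 /Nf eqxx.
rewrite -sum1dep_card big_distrr big_mkcond /=; apply: eq_bigr => v _.
by rewrite fvE; case: ifP => //; rewrite muln1.
Qed.
Lemma Cl_lv0 v : lv v = 0 -> Cl v = (iota v.2 * s / b) ^+ 2.
Proof.
case: v => [[x y] z]; rewrite /lv /= => hl.
have b1n := b10.
have hx : x = - (d1 / b1) * z.
  apply: (mulfI b1n); rewrite (_ : b1 * x = b1 * x + d1 * z - d1 * z); last by ring.
  by rewrite hl; field; exact: b1n.
have hd2 : d2 = d1 / b1 * b2.
  by apply: (mulfI b1n); rewrite hbd; field; exact: b1n.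
have hd' : d = iota (d1 / b1) * b.
  rewrite hd hb hd2 rmorphM mulrDr; congr (_ + _); last by ring.
  by rewrite -rmorphM divfK.
rewrite /Cl /lift3 /= hx expr_div_n exprMn hs hd' /conic_form /=.
rewrite !rmorphM rmorphN; field.
by rewrite hb0 fmorph_eq0 b1n.
Qed.

Lemma Nf_sqr (K : finFieldType) (w : K) : Nf (w ^+ 2) = if w == 0 then 1%N else 2%N.
Proof.
rewrite /Nf sqrf_eq0; case: (w == 0) => //.
by case: existsP => // -[]; exists w.
Qed.

Lemma step5 : (\sum_(v | lv v == 0%R) fv v)%N = (2 * (#|F| * #|F|.-1))%N.
Proof.
rewrite (eq_bigr (fun v => if v.2 != 0 then 2%N else 0%N)); last first.
  move=> v /eqP hl; rewrite fvE Cl_lv0 // Nf_sqr !mulf_eq0 invr_eq0 (negbTE hs0) (negbTE hb0).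
  by rewrite orbF fmorph_eq0; case: (v.2 == 0).
rewrite -big_mkcondr /= (eq_bigr (fun _ => (2 * 1)%N)) // -big_distrr /= sum1dep_card.
have gI : injective (fun w : F * F => (- (d1 / b1) * w.2, w.1, w.2)).
  by move=> [y z] [y' z'] /= [_ -> ->].
congr (_ * _)%N.
have -> : (#|F| * #|F|.-1)%N = #|setX [set: F] [set z : F | z != 0]|.
  rewrite cardsX cardsT -(cardC1 (0:F)); congr (_ * _)%N.
  by apply: eq_card => z; rewrite !inE.
rewrite -(card_imset _ gI); apply: eq_card => v; rewrite !inE.
apply/andP/imsetP => [[/eqP hl z0]|[[y z]]].
  exists (v.1.2, v.2); first by rewrite !inE z0.
  case: v hl z0 => [[x y] z]; rewrite /lv /= => hl _; congr (_, _, _).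
  apply: (mulfI b10); rewrite (_ : b1 * x = b1 * x + d1 * z - d1 * z); last by ring.
  by rewrite hl; field; exact: b10.
rewrite !inE /= => z0 ->; split => //; rewrite /lv /=; apply/eqP; field; exact: b10.
Qed.
Lemma Qd_id (t : F * F) (v : F * F * F) :
  Qd (t, v.1.1, v.2) = b2 * (t.1 ^+ 2 + omega * t.2 ^+ 2 - Cre v)
    - b1 * (2 * t.1 * t.2 - Cim v) - v.1.2 * v.2 * (b1 * d2 - b2 * d1).
Proof. rewrite /Qd /Cre /Cim /=; ring. Qed.

Lemma Cre_diff x y y' z : Cre (x, y, z) - Cre (x, y', z) = (y - y') * lv (x, y, z).
Proof. rewrite /Cre /lv /=; ring. Qed.

Lemma step6 : (\sum_(v | lv v != 0%R) fv v)%N = #|Wset|.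
Proof.
rewrite big_mkcond /=.
rewrite (eq_bigr (fun v => #|[set t : F * F | (lv v != 0) && ((t != (0, 0)) && (sg t ^+ 2 == Cl v))]|)); last first.
  move=> v _; rewrite /fv; case: (lv v != 0) => //=.
  by apply/esym/eqP; rewrite cards_eq0; apply/eqP/setP => t; rewrite !inE.
rewrite -(card_pair (fun v t => (lv v != 0) && ((t != (0, 0)) && (sg t ^+ 2 == Cl v)))).
have b1n := b10.
rewrite -(@card_in_imset _ _ (fun x : F * F * F * (F * F) => (x.2, x.1.1.1, x.1.2))); last first.
  move=> [[[x y] z] t] [[[x' y'] z'] t']; rewrite !inE /= !eqs.
  move=> /andP[l0 /andP[_ /andP[/eqP h1 _]]] /andP[_ /andP[_ /andP[/eqP h1' _]]] [et ex ez].
  subst t' x' z'; congr (_, _, _, _).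
  have : (y - y') * lv (x, y, z) = 0 by rewrite -Cre_diff -h1 -h1' subrr.
  by move/eqP; rewrite mulf_eq0 (negbTE l0) orbF subr_eq0 => /eqP.
apply: eq_card => w; rewrite !inE; apply/imsetP/idP => [[[[[x y] z] t]]|].
  rewrite inE /= eqs => /andP[l0 /andP[t0 /andP[/eqP h1 /eqP h2']]] ->.
  rewrite /= t0 -[b1 * x + d1 * z]/(lv (x, y, z)) l0 /=.
  by apply/eqP; rewrite (Qd_id t (x, y, z)) /= -h1 -h2' hbd; ring.
case: w => [[t x] z] /= /and3P[t0 l0 /eqP hq].
pose y := (t.1 ^+ 2 + omega * t.2 ^+ 2 - Cre (x, 0, z)) / (b1 * x + d1 * z).
exists (x, y, z, t) => //; rewrite inE /= eqs t0 l0 /=.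
have hE1 : t.1 ^+ 2 + omega * t.2 ^+ 2 = Cre (x, y, z).
  rewrite /y /Cre /=; field; exact: l0.
rewrite hE1 eqxx /=.
move: hq; rewrite (Qd_id t (x, y, z)) /= -hE1 hbd => hq.
have : b1 * (2 * t.1 * t.2 - Cim (x, y, z)) = 0.
  rewrite -[RHS]oppr0 -hq; ring.
by move/eqP; rewrite mulf_eq0 (negbTE b1n) /= subr_eq0.
Qed.
Lemma Qd_scale l p : Qd (scale4 l p) = l ^+ 2 * Qd p.
Proof. rewrite /Qd /scale4 /=; ring. Qed.

Lemma step7 : #|Wset| = (#|F|.-1 * #|Nset|)%N.
Proof.
rewrite /Nset -(@norm_count4 F (fun p => [&& p.1.1 != (0, 0), b1 * p.1.2 + d1 * p.2 != 0 & Qd p == 0])).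
  apply: eq_card => w; rewrite !inE.
  case: w => [[[t1 t2] x] z] /=.
  case: (eqVneq (t1, t2) (0, 0)) => [|/= ht]; first by rewrite andbF.
  have -> // : (t1, t2, x, z) != (0, 0, 0, 0).
  by apply/negP => /eqP [q1 q2 _ _]; move: ht; rewrite q1 q2 eqxx.
move=> l [[[t1 t2] x] z] l0 /=; rewrite Qd_scale /scale4 /= !xpair_eqE.
rewrite mulf_eq0 (negbTE l0) /= mulf_eq0 (negbTE l0) /= mulf_eq0 sqrf_eq0 (negbTE l0) /=.
rewrite (_ : b1 * (l * x) + d1 * (l * z) = l * (b1 * x + d1 * z)); last by ring.
by rewrite mulf_eq0 (negbTE l0).
Qed.
Lemma step8 :
  let Pi := [set p : F * F * F * F | norm4 p && (b1 * p.1.2 + d1 * p.2 == 0)] in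
  let Q := [set p : F * F * F * F | norm4 p && (Qd p == 0)] in
  let Q0 := [set p in Q | (p.1.1.1 == 0) && (p.1.1.2 == 0)] in
  ((#|Nset|)%:R : rat) = (#|Q|)%:R - (#|Q0|)%:R - (#|Pi :&: Q|)%:R + (#|Q0 :&: Pi|)%:R.
Proof.
move=> Pi Q Q0.
have sQ0 : Q0 \subset Q by apply/subsetP => p; rewrite inE => /andP[].
have k1 : #|Q| = (#|Q0| + #|Q :\: Q0|)%N.
  by rewrite -(cardsID Q0 Q) (setIidPr sQ0).
have hN : Nset = (Q :\: Q0) :\: Pi.
  apply/setP => -[[[t1 t2] x] z]; rewrite !inE /= xpair_eqE.
  by case: (norm4 _); case: (t1 == 0); case: (t2 == 0); case: (b1 * x + d1 * z == 0); case: (Qd _ == 0).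
have k2 : #|Q :\: Q0| = (#|(Q :\: Q0) :&: Pi| + #|Nset|)%N.
  by rewrite hN cardsID.
have k3 : #|Pi :&: Q| = (#|Q0 :&: Pi| + #|(Q :\: Q0) :&: Pi|)%N.
  rewrite -(cardsID Q0 (Pi :&: Q)); congr (_ + _)%N; apply: eq_card => -[[[t1 t2] x] z];
  rewrite /Pi /Q0 /Q !inE /=;
  by case: (norm4 _); case: (t1 == 0); case: (t2 == 0); case: (b1 * x + d1 * z == 0); case: (Qd _ == 0).
rewrite k1 k2 k3 !natrD; ring.
Qed.


Lemma main_count :
  let Pi := [set p : F * F * F * F | norm4 p && (b1 * p.1.2 + d1 * p.2 == 0)] in
  let Q := [set p : F * F * F * F | norm4 p && (Qd p == 0)] in
  let Q0 := [set p in Q | (p.1.1.1 == 0) && (p.1.1.2 == 0)] in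
  ((Eq iota a b c d e)%:R : rat) =
    2^-1 * ((#|Q|)%:R - (#|Q0|)%:R - (#|Pi :&: Q|)%:R + (#|Q0 :&: Pi|)%:R)
    + (#|F|)%:R.
Proof.
move=> Pi Q Q0; rewrite -step8.
have H : (2 * Eq iota a b c d e = 2 * #|F| + #|Nset|)%N.
  apply/eqP; rewrite -(eqn_pmul2l (card_gt1' F)) step1 mulnCA step2 step3.
  rewrite (bigID (fun v => lv v == 0)) /= step5 step6 step7.
  by rewrite mulnDr; apply/eqP; ring.
have : ((2 * Eq iota a b c d e)%N%:R : rat) = ((2 * #|F|)%N + #|Nset|)%N%:R by rewrite H.
rewrite natrD !natrM => h.
rewrite (_ : (Eq iota a b c d e)%:R = 2^-1 * (2 * (Eq iota a b c d e)%:R) :> rat); last by field.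
by rewrite h; field.
Qed.

End Main.

Theorem mainTheorem14
  (F L : finFieldType) (iota : {rmorphism F -> L})
  (hoddq : odd #|F|) (hL : #|L| = (#|F| ^ 2)%N)
  (omega : F) (homega : ~ exists x : F, x ^+ 2 = omega)
  (eps : L) (heps : eps ^+ 2 = iota omega)
  (a b c d e : L) (a1 a2 b1 b2 c1 c2 d1 d2 e1 e2 : F)
  (ha : a = iota a1 + eps * iota a2) (hb : b = iota b1 + eps * iota b2)
  (hc : c = iota c1 + eps * iota c2) (hd : d = iota d1 + eps * iota d2)
  (he : e = iota e1 + eps * iota e2)
  (hns : conic_nonsingular a b c d e)
  (hndef : ~ conic_defined_over iota a b c d e)
  (hb0 : b != 0) (hbd : b1 * d2 = b2 * d1) (hbd1 : (b1, d1) != (0, 0))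
  (hsq : exists s : L, s != 0 /\ s ^+ 2 = - b * c * d + a * d ^+ 2 + b ^+ 2 * e) :
  let a' := b1 * a2 - a1 * b2 in
  let c' := b1 * c2 - b2 * c1 in
  let e' := b1 * e2 - b2 * e1 in
  let Pi := [set p : F * F * F * F | norm4 p && (b1 * p.1.2 + d1 * p.2 == 0)] in
  let Q := [set p : F * F * F * F | norm4 p &&
              (b2 * p.1.1.1 ^+ 2 - 2 * b1 * p.1.1.1 * p.1.1.2
               + b2 * omega * p.1.1.2 ^+ 2 + a' * p.1.2 ^+ 2
               + c' * p.1.2 * p.2 + e' * p.2 ^+ 2 == 0)] in
  let Q0 := [set p in Q | (p.1.1.1 == 0) && (p.1.1.2 == 0)] in
  ((Eq iota a b c d e)%:R : rat) =
    2^-1 * ((#|Q|)%:R - (#|Q0|)%:R - (#|Pi :&: Q|)%:R + (#|Q0 :&: Pi|)%:R)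
    + (#|F|)%:R.
Proof.
have [s [hs0 hs]] := hsq.
exact: (main_count hoddq hL homega heps ha hb hc hd he hb0 hbd hbd1 hs0 hs).
Qed.
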